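(* For $N\ge1$ let $\mathbf{m}=N(1,0,\dots,0)^\top\in\mathbb{R}^{N+1}$, $\mathbf{M}=\mathrm{diag}(\mathbf{m})$, and let $\mathbf{Q}_N$ be the tridiagonal matrix with $(\mathbf{Q}_N)_{kk}=-N$, $(\mathbf{Q}_N)_{k+1,k}=N-k$, $(\mathbf{Q}_N)_{k-1,k}=k$ (indices $0,\dots,N$) and zeros elsewhere. For $\mu>0$ let $\mathbf{p}^{(N)}(\mu)=(p_0,\dots,p_N)$ be the positive vector with $\sum_i p_i=1$ satisfying $(\mathbf{M}+\mu\mathbf{Q}_N)\mathbf{p}=\overline{m}\,\mathbf{p}$, $\overline{m}=\mathbf{m}\cdot\mathbf{p}$, and let $\overline{r}=\overline{m}/N=p_0$. Then: (i) if $0<\mu<1$, then $\lim_{N\to\infty}p_0=\lim_{N\to\infty}\overline{r}=1-\mu$, and for each fixed integer $a\ge1$, $\lim_{N\to\infty}p_a=(1-\mu)\mu^a$; (ii) if $\mu\ge1$, then $\lim_{N\to\infty}\overline{r}=\lim_{N\to\infty}p_0=0$.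
   Context: This is the Crow–Kimura quasispecies model with the single peaked fitness landscape; $\mathbf{p}^{(N)}(\mu)$ is the normalized Perron eigenvector of $\mathbf{M}+\mu\mathbf{Q}_N$ and $\overline{m}$ its dominant eigenvalue. *)

(* Defs.v *)
From HB Require Import structures.
From mathcomp Require Import all_boot all_order all_algebra.
From mathcomp Require Import all_classical all_reals all_analysis.
Set Implicit Arguments. Unset Strict Implicit. Unset Printing Implicit Defensive.
Import Order.TTheory GRing.Theory Num.Theory.
Local Open Scope ring_scope.

Definition mvec (R : realType) (N : nat) : 'cV[R]_(N.+1) :=
  \col_(i < N.+1) (if (i : nat) == 0%N then N%:R else 0).

Definition Mmat (R : realType) (N : nat) : 'M[R]_(N.+1) :=
  \matrix_(i < N.+1, j < N.+1) (if (i == j) && ((i : nat) == 0%N) then N%:R else 0).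

Definition QN (R : realType) (N : nat) : 'M[R]_(N.+1) :=
  \matrix_(i < N.+1, j < N.+1)
    (if (i : nat) == (j : nat) then - N%:R
     else if (i : nat) == (j : nat).+1 then (N - j)%:R
     else if (i : nat).+1 == (j : nat) then (j : nat)%:R
     else 0).

Definition mbar (R : realType) (N : nat) (p : 'cV[R]_(N.+1)) : R :=
  \sum_(i < N.+1) mvec R N i 0 * p i 0.

Definition is_quasispecies (R : realType) (N : nat) (mu : R) (p : 'cV[R]_(N.+1)) : Prop :=
  (forall i : 'I_(N.+1), 0 < p i 0) /\
  \sum_(i < N.+1) p i 0 = 1 /\
  (Mmat R N + mu *: QN R N) *m p = mbar p *: p.

Definition rbar (R : realType) (N : nat) (p : 'cV[R]_(N.+1)) : R := mbar p / N%:R.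

(* Main.v *)
Require Import Defs.
From HB Require Import structures.
From mathcomp Require Import all_boot all_order all_algebra.
From mathcomp Require Import all_classical all_reals all_analysis.
From mathcomp Require Import zify ring lra.
Import Order.TTheory GRing.Theory Num.Theory.
Import numFieldNormedType.Exports.
Local Open Scope ring_scope.
Local Open Scope classical_set_scope.
Module Helpers.
Set Implicit Arguments. Unset Strict Implicit.
Section S.
Variable R : realType.

Lemma sum_ifeq n (k : nat) (F : 'I_n.+1 -> R) :
  \sum_(j < n.+1) (if (j:nat) == k then F j else 0) = if (k < n.+1)%N then F (inord k) else 0.
Proof.
case: (ltnP k n.+1) => Hk.
  rewrite (bigD1 (inord k)) //= inordK // eqxx big1 ?addr0 // => j Hj.
  rewrite ifF //; apply/negbTE; apply: contra Hj => /eqP <-; by rewrite inord_val.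
rewrite big1 // => j _; rewrite ifF //; apply/negbTE; apply/eqP => E.
by move: (ltn_ord j); rewrite E ltnNge Hk.
Qed.

Lemma mbarE N (p : 'cV[R]_N.+1) : mbar p = N%:R * p ord0 0.
Proof.
rewrite /mbar (bigD1 ord0) //= big1 ?addr0; first by rewrite mxE eqxx.
move=> i Hi; rewrite mxE ifF ?mul0r //; apply/negbTE; apply: contra Hi => /eqP H.
by apply/eqP/val_inj.
Qed.

Lemma row_eq N mu (p : 'cV[R]_N.+1) (H : is_quasispecies mu p) (i : 'I_N.+1) :
 \sum_j (Mmat R N i j + mu * QN R N i j) * p j 0 = mbar p * p i 0.
Proof.
case: H => _ [_ /matrixP/(_ i 0)]; rewrite !mxE => <-.
by apply: eq_bigr => j _; rewrite !mxE.
Qed.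



Lemma inord0 n : inord 0 = ord0 :> 'I_n.+1.
Proof. by apply: val_inj; rewrite /= inordK. Qed.

Lemma qs_row0 N mu (p : 'cV[R]_N.+1) (H : is_quasispecies mu p) : (1 <= N)%N ->
  N%:R * p ord0 0 + mu * (- (N%:R * p ord0 0) + p (inord 1) 0) = N%:R * p ord0 0 * p ord0 0.
Proof.
move=> HN; have := row_eq H ord0; rewrite mbarE.
rewrite (eq_bigr (fun j : 'I_N.+1 => (if (j:nat)==0%N then (N%:R - mu*N%:R) * p j 0 else 0)
   + (if (j:nat)==1%N then mu * p j 0 else 0))).
  rewrite big_split /= !sum_ifeq (ltnS 1 N) HN /= inord0 => <-.
  ring.
move=> j _; rewrite !mxE -[ord0 == j]val_eqE /=.
case: j => [[|[|j]] Hj] /=.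
all: rewrite ?mulr0 ?addr0 ?add0r ?mul0r ?mulr1 ?mul1r; try ring.
Qed.

Lemma rowa N mu (p : 'cV[R]_N.+1) (H : is_quasispecies mu p) (a : nat) : (a.+2 <= N)%N ->
  mu * (N - a)%:R * p (inord a) 0 - mu * N%:R * p (inord a.+1) 0
   + mu * (a.+2)%:R * p (inord a.+2) 0 = N%:R * p ord0 0 * p (inord a.+1) 0.
Proof.
move=> HN; have := row_eq H (inord a.+1); rewrite mbarE.
rewrite (eq_bigr (fun j : 'I_N.+1 => (if (j:nat)==a then mu * (N - a)%:R * p j 0 else 0)
   + (if (j:nat)==a.+1 then - (mu * N%:R) * p j 0 else 0)
   + (if (j:nat)==a.+2 then mu * (a.+2)%:R * p j 0 else 0))).
  rewrite !big_split /= !sum_ifeq.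
  have -> : (a < N.+1)%N by lia.
  have -> : (a.+1 < N.+1)%N by lia.
  have -> : (a.+2 < N.+1)%N by lia.
  by move=> <-; rewrite mulNr.
have Ha : (a.+1 < N.+1)%N by lia.
move=> j _; rewrite !mxE inordK //.
have -> : (a.+1 == 0)%N = false by [].
rewrite andbF add0r.
case: j => j Hj /=.
case: (eqVneq j a) => [Eja|Nja].
  subst j.
  try (have -> : (a.+1 == a) = false by apply/eqP; lia).
  try (have -> : (a == a.+1) = false by apply/eqP; lia).
  try (have -> : (a == a.+2) = false by apply/eqP; lia).
  rewrite ?eqxx ?mulr0 ?addr0 ?add0r ?mul0r; ring.
case: (eqVneq j a.+1) => [Eja|Nja1].
  subst j.
  try (have -> : (a.+1 == a) = false by apply/eqP; lia).
  try (have -> : (a.+1 == a.+2) = false by apply/eqP; lia).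
  rewrite ?eqxx ?mulr0 ?addr0 ?add0r ?mul0r; ring.
case: (eqVneq j a.+2) => [Eja|Nja2].
  subst j.
  try (have -> : (a.+1 == a.+2) = false by apply/eqP; lia).
  try (have -> : (a.+1 == a.+3) = false by apply/eqP; lia).
  try (have -> : (a.+2 == a) = false by apply/eqP; lia).
  rewrite ?eqxx ?mulr0 ?addr0 ?add0r ?mul0r; ring.
try (have -> : (a.+1 == j) = false by apply/eqP; lia).
try (have -> : (a.+1 == j.+1) = false by apply/eqP; lia).
try (have -> : (a.+2 == j) = false by apply/eqP; lia).
by rewrite mulr0 mul0r !addr0.
Qed.
End S.


Section A.
Variable R : realType.

Lemma cvg_near_eq (f g : nat -> R) (l : R) :
  (\forall N \near \oo, f N = g N) -> (f @ \oo --> l) -> (g @ \oo --> l).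
Proof. by move=> Hfg Hf; apply: cvg_trans Hf; apply: near_eq_cvg. Qed.

Lemma cvg_invn (c : R) : (fun N : nat => c / N%:R) @ \oo --> 0.
Proof.
have H : (fun N : nat => N%:R^-1 : R) @ \oo --> 0.
  by rewrite -cvg_shiftS; exact: cvg_harmonic.
have := cvgMl_tmp (a := c) H; rewrite mulr0; exact.
Qed.

Lemma coord_bounds N mu (p : 'cV[R]_N.+1) : is_quasispecies mu p ->
  forall i, 0 < p i 0 /\ p i 0 <= 1.
Proof.
case=> Hp [Hs _] i; split => //.
rewrite -Hs (bigD1 i) //= lerDl sumr_ge0 // => j _; exact: ltW.
Qed.

Lemma rbarE N (p : 'cV[R]_N.+1) : (1 <= N)%N -> rbar p = p ord0 0.
Proof.
move=> HN; rewrite /rbar mbarE; field.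
by rewrite pnatr_eq0 -lt0n.
Qed.

Lemma key N mu (p : 'cV[R]_N.+1) : is_quasispecies mu p -> (1 <= N)%N ->
  N%:R * (p ord0 0 * (p ord0 0 - (1 - mu))) = mu * p (inord 1) 0.
Proof.
move=> H HN; have H0 := qs_row0 H HN.
have E : mu * p (inord 1) 0 = N%:R * p ord0 0 * p ord0 0 - N%:R * p ord0 0 + mu * (N%:R * p ord0 0).
  by rewrite -H0; ring.
by rewrite E; ring.
Qed.
End A.

End Helpers.
Import Helpers.

Theorem proposition4 (R : realType) (mu : R) (p : forall N : nat, 'cV[R]_(N.+1)) :
  0 < mu ->
  (forall N : nat, (1 <= N)%N -> is_quasispecies mu (p N)) ->
  (mu < 1 ->
     ((fun N => p N ord0 0) @ \oo --> 1 - mu) /\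
     ((fun N => rbar (p N)) @ \oo --> 1 - mu) /\
     (forall a : nat, (1 <= a)%N ->
        (fun N => p N (inord a) 0) @ \oo --> (1 - mu) * mu ^+ a)) /\
  (1 <= mu ->
     ((fun N => rbar (p N)) @ \oo --> 0%R) /\
     ((fun N => p N ord0 0) @ \oo --> 0%R)).
Proof.
Ltac neq0 := repeat (apply/andP; split); apply/eqP => ?; lra.
move=> mu0 Hq.
have Hb := fun N HN i => coord_bounds (Hq N HN) i.
have Hk := fun N HN => key (Hq N HN) HN.
have RB : forall l : R, (fun N => p N ord0 0) @ \oo --> l -> (fun N => rbar (p N)) @ \oo --> l.
  move=> l; apply: cvg_near_eq; near=> N; rewrite rbarE //; near: N; exact: nbhs_infty_ge.
have P0 : mu < 1 -> (fun N => p N ord0 0) @ \oo --> 1 - mu.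
  move=> mu1.
  apply: (squeeze_cvgr (f := fun _ => 1 - mu) (h := fun N : nat => 1 - mu + (mu / (1 - mu)) / N%:R)).
  - near=> N.
    have HN : (1 <= N)%N by near: N; exact: nbhs_infty_ge.
    have [h0 h1] := Hb N HN ord0. have [g0 g1] := Hb N HN (inord 1). have E := Hk N HN.
    move: h0 h1 g0 g1 E.
    set x := p N ord0 0; set y := p N (inord 1) 0 => h0 h1 g0 g1 E.
    have n0 : 0 < N%:R :> R by rewrite ltr0n.
    have Xp : 0 < x - (1 - mu).
      have : 0 < N%:R * (x * (x - (1 - mu))) by rewrite E mulr_gt0.
      by rewrite pmulr_rgt0 // pmulr_rgt0.
    have Lx : 1 - mu <= x by lra.
    apply/andP; split => //.
    rewrite -subr_ge0.
    have -> : 1 - mu + mu / (1 - mu) / N%:R - x = (mu - N%:R * (1-mu) * (x - (1-mu))) / ((1-mu) * N%:R).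
      field.
      neq0.
    apply: divr_ge0; last by nra.
    have h2 : 0 <= N%:R * (x - (1-mu)) by nra.
    nra.
  - exact: cvg_cst.
  - rewrite -[X in _ --> X]addr0; apply: cvgD; [exact: cvg_cst | exact: cvg_invn].
have P0' : 1 <= mu -> (fun N => p N ord0 0) @ \oo --> 0.
  move=> mu1; apply/cvgrPdist_le => e e0.
  near=> N.
  have HN : (1 <= N)%N by near: N; exact: nbhs_infty_ge.
  have Hn : mu / (e * e) < N%:R by near: N; exact: nbhs_infty_gtr.
  have [h0 h1] := Hb N HN ord0. have [g0 g1] := Hb N HN (inord 1). have E := Hk N HN.
  move: h0 h1 g0 g1 E.
  set x := p N ord0 0; set y := p N (inord 1) 0 => h0 h1 g0 g1 E.
  have n0 : 0 < N%:R :> R by rewrite ltr0n.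
  rewrite sub0r normrN ger0_norm; last exact: ltW.
  have Em : mu = (mu / (e * e)) * (e * e).
    field. neq0.
  have ee : 0 < e * e by rewrite mulr_gt0.
  have Hm : mu < N%:R * (e * e) by rewrite {1}Em; nra.
  have h2 : 0 <= N%:R * x by nra.
  have h3 : N%:R * (x * x) <= mu by nra.
  rewrite leNgt; apply/negP => hx.
  have h4 : e * e < x * x by nra.
  nra.
have PA : mu < 1 -> forall a, (fun N => p N (inord a) 0) @ \oo --> (1 - mu) * mu ^+ a.
  move=> mu1; elim => [|a IH].
    rewrite expr0 mulr1; apply: cvg_near_eq (P0 mu1); near=> N; by rewrite inord0.
  pose fe := fun N : nat => p N (inord a.+1) 0 * (mu + p N ord0 0) - mu * (1 - a%:R / N%:R) * p N (inord a) 0.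
  have Hfe : fe @ \oo --> 0.
    apply: (squeeze_cvgr (f := fun _ => 0) (h := fun N : nat => mu * (a.+2)%:R / N%:R)).
    + near=> N.
      have HN : (a.+2 <= N)%N by near: N; exact: nbhs_infty_ge.
      have HN1 : (1 <= N)%N by lia.
      have Er := rowa (Hq N HN1) HN.
      have [g0 g1] := Hb N HN1 (inord a.+2).
      have Hd : (N - a)%:R = N%:R - a%:R :> R by rewrite natrB //; lia.
      rewrite Hd in Er.
      have E2 : mu * (a.+2)%:R * p N (inord a.+2) 0 = N%:R * p N ord0 0 * p N (inord a.+1) 0
         - mu * (N%:R - a%:R) * p N (inord a) 0 + mu * N%:R * p N (inord a.+1) 0.
        by rewrite -Er; ring.
      have n0 : 0 < N%:R :> R by rewrite ltr0n; lia.
      have -> : fe N = mu * (a.+2)%:R * p N (inord a.+2) 0 / N%:R.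
        rewrite E2 /fe. field. neq0.
      apply/andP; split.
        apply: divr_ge0; [apply: mulr_ge0; [apply: mulr_ge0; [exact: ltW mu0|exact: ler0n] | exact: ltW g0] | exact: ler0n].
      rewrite -subr_ge0.
      have -> : mu * (a.+2)%:R / N%:R - mu * (a.+2)%:R * p N (inord a.+2) 0 / N%:R =
         mu * (a.+2)%:R * (1 - p N (inord a.+2) 0) / N%:R by ring.
      apply: divr_ge0; last exact: ler0n.
      apply: mulr_ge0; last by rewrite subr_ge0.
      apply: mulr_ge0; [exact: ltW mu0|exact: ler0n].
    + exact: cvg_cst.
    + exact: cvg_invn.
  have Lim : (fun N => (fe N + mu * (1 - a%:R / N%:R) * p N (inord a) 0) / (mu + p N ord0 0))
      @ \oo --> (0 + mu * (1 - 0) * ((1 - mu) * mu ^+ a)) / (mu + (1 - mu)).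
    apply: cvgM.
      apply: cvgD; first exact: Hfe.
      apply: cvgM; last exact: IH.
      apply: cvgM; first exact: cvg_cst.
      apply: cvgB; first exact: cvg_cst.
      exact: cvg_invn.
    apply: cvgV.
      by rewrite (_ : mu + (1 - mu) = 1) ?oner_eq0 //; ring.
    apply: cvgD; first exact: cvg_cst.
    exact: P0.
  have -> : (1 - mu) * mu ^+ a.+1 = (0 + mu * (1 - 0) * ((1 - mu) * mu ^+ a)) / (mu + (1 - mu)).
    rewrite (_ : mu + (1 - mu) = 1); last by ring.
    by rewrite divr1 exprS; ring.
  apply: cvg_near_eq Lim; near=> N.
  have HN : (1 <= N)%N by near: N; exact: nbhs_infty_ge.
  have [h0 _] := Hb N HN ord0.
  rewrite /fe subrK; field.
  neq0.
split.
  move=> mu1; split; first exact: P0 mu1.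
  split; first exact: RB _ (P0 mu1).
  by move=> a _; exact: PA mu1 a.
move=> mu1; have := P0' mu1; split => //; exact: RB.
Unshelve. all: by end_near.
Qed.
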